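(* Let $M$ be two-dimensional Misner spacetime: the quotient of $\mathbb M_+=\{(t,x)\in\mathbb R^2: t+x>0\}$ with metric $-dt^2+dx^2$ by the discrete isometry group generated by the boost $(t,x)\mapsto(t\cosh\xi_0+x\sinh\xi_0,\ t\sinh\xi_0+x\cosh\xi_0)$ for a fixed $\xi_0>0$ (equivalently $\mathbb R\times S^1$ with coordinates $\tau=\frac14(t^2-x^2)$, $\psi=\ln(t+x)^2-\ln4$ and metric $2\,d\tau\,d\psi+\tau\,d\psi^2$). Then $\mathcal N_p=N_p$ for every $p\in M$.
   Context: $OM$ is the pseudo-orthonormal frame bundle with projection $\pi$, equipped with the b-metric $G(X,Y)=\langle\boldsymbol\theta(X),\boldsymbol\theta(Y)\rangle+\langle\boldsymbol\omega(X),\boldsymbol\omega(Y)\rangle$ ($\boldsymbol\theta$ canonical form, $\boldsymbol\omega$ Levi-Civita connection form, Euclidean inner products relative to fixed bases); $l(\mu)$ is the $G$-length of a curve in $OM$. $\tilde d_{M}(p,q)=\inf\{l(\mu):\mu\colon[0,1]\to OM,\ \pi(\mu(0))=p,\ \pi(\mu(1))=q\}$, $\mathcal N_p=\{q:\tilde d_M(p,q)=0\}$, and $N_p$ is the set of points joined to $p$ by null geodesics in $M$. *)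

(* Defs.v *)
From Stdlib Require Import Reals ZArith.
From Coquelicot Require Import Coquelicot.
Open Scope R_scope.

Definition eta (u v : R * R) : R := - fst u * fst v + snd u * snd v.

Definition InMplus (p : R * R) : Prop := 0 < fst p + snd p.

Definition boost (xi : R) (p : R * R) : R * R :=
  (fst p * cosh xi + snd p * sinh xi, fst p * sinh xi + snd p * cosh xi).

(* The k-th element (k : Z) of the deck group generated by boost xi0:
   (boost xi0)^k = boost (k * xi0). *)
Definition deck (xi0 : R) (k : Z) (p : R * R) : R * R := boost (IZR k * xi0) p.

(* Misner spacetime M = M_+ / <boost xi0>.  A point of M is represented by any
   p with InMplus p; p and q represent the same point iff q = deck xi0 k p. *)

(* C^1 real function (on all of R; curves are used on [0,1]). *)
Definition C1 (f : R -> R) : Prop :=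
  (forall s, ex_derive f s) /\ (forall s, continuous (Derive f) s).

Definition C1_2 (g : R -> R * R) : Prop :=
  C1 (fun s => fst (g s)) /\ C1 (fun s => snd (g s)).

Definition D2 (g : R -> R * R) (s : R) : R * R :=
  (Derive (fun u => fst (g u)) s, Derive (fun u => snd (g u)) s).

(* Since M_+ is an open subset of Minkowski
   space with its global inertial chart, O(M_+) = M_+ x {such frames}. *)
Definition frame_ok (e0 e1 : R * R) : Prop :=
  eta e0 e0 = -1 /\ eta e1 e1 = 1 /\ eta e0 e1 = 0.

Definition OInMplus_curve (c e0 e1 : R -> R * R) : Prop :=
  C1_2 c /\ C1_2 e0 /\ C1_2 e1 /\
  (forall s, 0 <= s <= 1 -> InMplus (c s) /\ frame_ok (e0 s) (e1 s)).

(* Canonical form theta(mu') : components of c' in the frame (e0,e1),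
   c' = theta0 e0 + theta1 e1. *)
Definition theta0 (c e0 : R -> R * R) (s : R) : R := - eta (D2 c s) (e0 s).
Definition theta1 (c e1 : R -> R * R) (s : R) : R := eta (D2 c s) (e1 s).
(* Levi-Civita connection form omega(mu') in o(1,1) = R.B with
   B = [[0,1],[1,0]] : e0' = w e1, e1' = w e0, where w = eta(e0', e1). *)
Definition omega (e0 e1 : R -> R * R) (s : R) : R := eta (D2 e0 s) (e1 s).

(* G(mu',mu') = <theta,theta> + <omega,omega>  (Euclidean, fixed bases). *)
Definition Gsq (c e0 e1 : R -> R * R) (s : R) : R :=
  (theta0 c e0 s) ^ 2 + (theta1 c e1 s) ^ 2 + (omega e0 e1 s) ^ 2.

Definition blength (c e0 e1 : R -> R * R) : R :=
  RInt (fun s => sqrt (Gsq c e0 e1 s)) 0 1.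

(* Curves in OM = O(M_+)/deck group are exactly projections of curves in
   O(M_+) (with equal G-length); pi(mu(0)) = [p] and pi(mu(1)) = [q] means the
   lifted curve starts over some deck translate of p and ends over some deck
   translate of q. *)
Definition dtilde (xi0 : R) (p q : R * R) : Rbar :=
  Glb_Rbar (fun l => exists (c e0 e1 : R -> R * R) (j k : Z),
     OInMplus_curve c e0 e1 /\ c 0 = deck xi0 j p /\ c 1 = deck xi0 k q /\
     l = blength c e0 e1).

Definition calN (xi0 : R) (p q : R * R) : Prop := dtilde xi0 p q = Finite 0.

(* A null geodesic gamma : [0,1] -> M_+ (lifted to the cover): C^2, geodesic
   equation gamma'' = 0 (Christoffel symbols vanish in the inertial chart),
   and eta(gamma', gamma') = 0. *)
Definition null_geodesic (g : R -> R * R) : Prop :=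
  C1_2 g /\ C1_2 (D2 g) /\
  (forall s, 0 <= s <= 1 -> InMplus (g s) /\ D2 (D2 g) s = (0, 0) /\
                             eta (D2 g s) (D2 g s) = 0).

Definition Np (xi0 : R) (p q : R * R) : Prop :=
  exists (g : R -> R * R) (j k : Z),
    null_geodesic g /\ g 0 = deck xi0 j p /\ g 1 = deck xi0 k q.

(* Main.v *)
Require Import Defs.
From Stdlib Require Import Reals ZArith Lra Lia Psatz Classical.
From Coquelicot Require Import Coquelicot.
Open Scope R_scope.

Definition uc (z : R * R) : R := fst z + snd z.
Definition vc (z : R * R) : R := fst z - snd z.
Definition dd (a b : R * R) : R * R := (fst a - fst b, snd a - snd b).

Lemma boost_u th z : uc (boost th z) = exp th * uc z.
Proof. unfold uc, boost, cosh, sinh; simpl. rewrite exp_Ropp. field. apply Rgt_not_eq, exp_pos. Qed.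
Lemma boost_v th z : vc (boost th z) = exp (- th) * vc z.
Proof. unfold vc, boost, cosh, sinh; simpl. rewrite exp_Ropp. field. apply Rgt_not_eq, exp_pos. Qed.

Lemma eta_dd a b : eta (dd a b) (dd a b) = - ((uc a - uc b) * (vc a - vc b)).
Proof. unfold eta, dd, uc, vc; simpl; ring. Qed.

Definition Fm (xi0 : R) (p q : R * R) (m : Z) : R :=
  (exp (IZR m * xi0) * uc q - uc p) * (exp (- (IZR m * xi0)) * vc q - vc p).

Lemma deck_interval xi0 p q j k :
  eta (dd (deck xi0 k q) (deck xi0 j p)) (dd (deck xi0 k q) (deck xi0 j p))
  = - Fm xi0 p q (k - j).
Proof.
  rewrite eta_dd. unfold deck, Fm. rewrite !boost_u, !boost_v, minus_IZR.
  replace (- ((IZR k - IZR j) * xi0)) with (- (IZR k * xi0) + IZR j * xi0) by ring.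
  replace ((IZR k - IZR j) * xi0) with (IZR k * xi0 + - (IZR j * xi0)) by ring.
  rewrite !exp_plus.
  assert (HE : exp (IZR j * xi0) * exp (- (IZR j * xi0)) = 1).
  { rewrite <- exp_plus. replace (_ + _) with 0 by ring. apply exp_0. }
  set (E := exp (IZR j * xi0)) in *. set (E' := exp (- (IZR j * xi0))) in *.
  transitivity (- ((E * E') * ((exp (IZR k * xi0) * E' * uc q - uc p) *
                   (exp (- (IZR k * xi0)) * E * vc q - vc p)))).
  - replace E' with (/ E) by (unfold E, E'; rewrite exp_Ropp; reflexivity).
    field. unfold E; apply Rgt_not_eq, exp_pos.
  - rewrite HE; ring.
Qed.

Lemma finite_part (f : Z -> R) : (forall m, f m <> 0) ->
  forall n : nat, exists d, 0 < d /\ forall m : Z,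
    (- Z.of_nat n <= m <= Z.of_nat n)%Z -> d <= Rabs (f m).
Proof.
  intros H0 n. induction n as [|n [d [Hd IH]]].
  - exists (Rabs (f 0%Z)). split. apply Rabs_pos_lt, H0.
    intros m Hm. replace m with 0%Z by lia. lra.
  - exists (Rmin d (Rmin (Rabs (f (Z.of_nat (S n)))) (Rabs (f (- Z.of_nat (S n))%Z))));
    split.
    + apply Rmin_glb_lt; [lra|apply Rmin_glb_lt; apply Rabs_pos_lt, H0].
    + intros m Hm.
      destruct (Z.eq_dec m (Z.of_nat (S n))) as [->|H1].
      { eapply Rle_trans; [apply Rmin_r|]. apply Rmin_l. }
      destruct (Z.eq_dec m (- Z.of_nat (S n))%Z) as [->|H2].
      { eapply Rle_trans; [apply Rmin_r|]. apply Rmin_r. }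
      eapply Rle_trans; [apply Rmin_l|]. apply IH. lia.
Qed.

Lemma exp_large xi (hxi : 0 < xi) X : exists M : Z, (0 <= M)%Z /\
  forall m : Z, (M <= m)%Z -> X <= exp (IZR m * xi).
Proof.
  exists (Z.max 0 (up (Rabs X / xi))). split. lia.
  intros m Hm. destruct (archimed (Rabs X / xi)) as [Ha _].
  assert (H1 : IZR (up (Rabs X / xi)) <= IZR m).
  { apply IZR_le. lia. }
  assert (H2 : Rabs X / xi * xi = Rabs X) by (field; lra).
  assert (H3 : Rabs X <= IZR m * xi).
  { rewrite <- H2. apply Rmult_le_compat_r; lra. }
  pose proof (exp_ineq1_le (IZR m * xi)). pose proof (Rle_abs X). lra.
Qed.

Lemma tail_pos a b c d : 0 < a -> 0 < b -> (c <> 0 \/ d <> 0) ->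
  exists X dl, 0 < dl /\ forall x, X <= x -> dl <= Rabs ((x * a - b) * (c / x - d)).
Proof.
  intros ha hb hcd. destruct (Req_dec d 0) as [Hd|Hd].
  - subst d. destruct hcd as [hc|hc]; [|easy].
    exists (Rmax 1 (2 * b / a)), (a * Rabs c / 2). split.
    { apply Rabs_pos_lt in hc. apply Rmult_lt_0_compat; [apply Rmult_lt_0_compat|]; lra. }
    intros x Hx. pose proof (Rmax_l 1 (2*b/a)). pose proof (Rmax_r 1 (2*b/a)).
    assert (hx : 0 < x) by lra.
    replace ((x * a - b) * (c / x - 0)) with ((a - b / x) * c) by (field; lra).
    rewrite Rabs_mult.
    assert (Hbx : b / x <= a / 2).
    { apply (Rmult_le_reg_r x); [lra|]. unfold Rdiv. rewrite Rmult_assoc, Rinv_l by lra.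
      assert (2 * b / a * a = 2 * b) by (field; lra).
      assert (2*b/a * a <= x * a) by (apply Rmult_le_compat_r; lra). nra. }
    assert (0 < b / x) by (apply Rdiv_lt_0_compat; lra).
    rewrite (Rabs_right (a - b/x)) by lra.
    pose proof (Rabs_pos c). nra.
  - exists (Rmax 1 (Rmax (2 * b / a) (2 * Rabs c / Rabs d))), (a * Rabs d / 4). split.
    { apply Rabs_pos_lt in Hd. apply Rmult_lt_0_compat; [apply Rmult_lt_0_compat|]; lra. }
    intros x Hx. pose proof (Rmax_l 1 (Rmax (2 * b / a) (2 * Rabs c / Rabs d))).
    pose proof (Rmax_r 1 (Rmax (2 * b / a) (2 * Rabs c / Rabs d))).
    pose proof (Rmax_l (2 * b / a) (2 * Rabs c / Rabs d)).
    pose proof (Rmax_r (2 * b / a) (2 * Rabs c / Rabs d)).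
    assert (hx : 0 < x) by lra. pose proof (Rabs_pos_lt _ Hd) as Hd'.
    rewrite Rabs_mult.
    assert (K1 : a / 2 <= Rabs (x * a - b)).
    { assert (2 * b / a * a = 2 * b) by (field; lra).
      assert (2*b/a * a <= x * a) by (apply Rmult_le_compat_r; lra).
      rewrite Rabs_right by nra. nra. }
    assert (K2 : Rabs d / 2 <= Rabs (c / x - d)).
    { assert (Hc : Rabs (c / x) <= Rabs d / 2).
      { unfold Rdiv. rewrite Rabs_mult, Rabs_inv, (Rabs_right x) by lra.
        apply (Rmult_le_reg_r x); [lra|]. rewrite Rmult_assoc, Rinv_l by lra.
        assert (2 * Rabs c / Rabs d * Rabs d = 2 * Rabs c) by (field; lra).
        assert (2 * Rabs c / Rabs d * Rabs d <= x * Rabs d) by (apply Rmult_le_compat_r; lra).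
        nra. }
      pose proof (Rabs_triang_inv d (c / x)).
      rewrite Rabs_minus_sym. lra. }
    pose proof (Rabs_pos (c / x - d)). nra.
Qed.

Lemma tail_neg a b c d : 0 < a -> 0 < b -> (c <> 0 \/ d <> 0) ->
  exists Y dl, 0 < dl /\ forall y, Y <= y -> dl <= Rabs ((a / y - b) * (y * c - d)).
Proof.
  intros ha hb hcd. destruct (Req_dec c 0) as [Hc|Hc].
  - subst c. destruct hcd as [hc|hd]; [easy|].
    exists (Rmax 1 (2 * a / b)), (b * Rabs d / 2). split.
    { apply Rabs_pos_lt in hd. apply Rmult_lt_0_compat; [apply Rmult_lt_0_compat|]; lra. }
    intros y Hy. pose proof (Rmax_l 1 (2*a/b)). pose proof (Rmax_r 1 (2*a/b)).
    assert (hy : 0 < y) by lra.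
    replace ((a / y - b) * (y * 0 - d)) with ((b - a / y) * d) by (field; lra).
    rewrite Rabs_mult.
    assert (Hbx : a / y <= b / 2).
    { apply (Rmult_le_reg_r y); [lra|]. unfold Rdiv. rewrite Rmult_assoc, Rinv_l by lra.
      assert (2 * a / b * b = 2 * a) by (field; lra).
      assert (2*a/b * b <= y * b) by (apply Rmult_le_compat_r; lra). nra. }
    assert (0 < a / y) by (apply Rdiv_lt_0_compat; lra).
    rewrite (Rabs_right (b - a/y)) by lra.
    pose proof (Rabs_pos d). nra.
  - exists (Rmax 1 (Rmax (2 * a / b) (2 * Rabs d / Rabs c))), (b * Rabs c / 4). split.
    { apply Rabs_pos_lt in Hc. apply Rmult_lt_0_compat; [apply Rmult_lt_0_compat|]; lra. }
    intros y Hy. pose proof (Rmax_l 1 (Rmax (2 * a / b) (2 * Rabs d / Rabs c))).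
    pose proof (Rmax_r 1 (Rmax (2 * a / b) (2 * Rabs d / Rabs c))).
    pose proof (Rmax_l (2 * a / b) (2 * Rabs d / Rabs c)).
    pose proof (Rmax_r (2 * a / b) (2 * Rabs d / Rabs c)).
    assert (hy : 0 < y) by lra. pose proof (Rabs_pos_lt _ Hc) as Hc'.
    rewrite Rabs_mult.
    assert (K1 : b / 2 <= Rabs (a / y - b)).
    { assert (Hbx : a / y <= b / 2).
      { apply (Rmult_le_reg_r y); [lra|]. unfold Rdiv. rewrite Rmult_assoc, Rinv_l by lra.
        assert (2 * a / b * b = 2 * a) by (field; lra).
        assert (2*a/b * b <= y * b) by (apply Rmult_le_compat_r; lra). nra. }
      assert (0 < a / y) by (apply Rdiv_lt_0_compat; lra).
      rewrite Rabs_left by lra. lra. }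
    assert (K2 : Rabs c / 2 <= Rabs (y * c - d)).
    { assert (2 * Rabs d / Rabs c * Rabs c = 2 * Rabs d) by (field; lra).
      assert (2 * Rabs d / Rabs c * Rabs c <= y * Rabs c) by (apply Rmult_le_compat_r; lra).
      pose proof (Rabs_triang_inv (y * c) d) as K7. rewrite Rabs_mult, (Rabs_right y) in K7 by lra.
      nra. }
    pose proof (Rabs_pos (y * c - d)). nra.
Qed.

Lemma discrete xi (hxi : 0 < xi) a b c d : 0 < a -> 0 < b ->
  (forall e, 0 < e -> exists m : Z,
     Rabs ((exp (IZR m * xi) * a - b) * (exp (- (IZR m * xi)) * c - d)) < e) ->
  exists m : Z, (exp (IZR m * xi) * a - b) * (exp (- (IZR m * xi)) * c - d) = 0.
Proof.
  intros ha hb H. apply NNPP. intros Hn.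
  assert (H0 : forall m : Z,
     (exp (IZR m * xi) * a - b) * (exp (- (IZR m * xi)) * c - d) <> 0).
  { intros m Hm. apply Hn. exists m. exact Hm. }
  destruct (classic (c <> 0 \/ d <> 0)) as [hcd|hcd].
  2: { apply (H0 0%Z). assert (c = 0) by (apply NNPP; tauto).
       assert (d = 0) by (apply NNPP; tauto). subst. ring. }
  destruct (tail_pos a b c d ha hb hcd) as [X [d1 [Hd1 HX]]].
  destruct (tail_neg a b c d ha hb hcd) as [Y [d2 [Hd2 HY]]].
  destruct (exp_large xi hxi X) as [M1 [HM1 HM1']].
  destruct (exp_large xi hxi Y) as [M2 [HM2 HM2']].
  destruct (finite_part _ H0 (Z.to_nat (Z.max M1 M2))) as [d3 [Hd3 H3]].
  destruct (H (Rmin d1 (Rmin d2 d3))) as [m Hm].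
  { apply Rmin_glb_lt; [lra|apply Rmin_glb_lt; lra]. }
  pose proof (Rmin_l d1 (Rmin d2 d3)). pose proof (Rmin_r d1 (Rmin d2 d3)).
  pose proof (Rmin_l d2 d3). pose proof (Rmin_r d2 d3).
  destruct (Z_le_gt_dec M1 m) as [Hm1|Hm1].
  { specialize (HX _ (HM1' m Hm1)).
    assert (E : (exp (IZR m * xi) * a - b) * (exp (- (IZR m * xi)) * c - d)
      = (exp (IZR m * xi) * a - b) * (c / exp (IZR m * xi) - d))
      by (rewrite exp_Ropp; unfold Rdiv; ring).
    rewrite E in Hm. lra. }
  destruct (Z_le_gt_dec m (- M2)) as [Hm2|Hm2].
  { assert (Hy := HM2' (- m)%Z ltac:(lia)). rewrite opp_IZR in Hy.
    specialize (HY _ Hy).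
    assert (E : (exp (IZR m * xi) * a - b) * (exp (- (IZR m * xi)) * c - d)
      = (a / exp (- IZR m * xi) - b) * (exp (- IZR m * xi) * c - d)).
    { replace (- IZR m * xi) with (- (IZR m * xi)) by ring.
      rewrite exp_Ropp. unfold Rdiv. rewrite Rinv_inv. ring. }
    rewrite E in Hm. lra. }
  specialize (H3 m ltac:(lia)). lra.
Qed.

Lemma cont_mult (f g : R -> R) x : continuous f x -> continuous g x ->
  continuous (fun y => f y * g y) x.
Proof. intros; exact (continuous_mult f g x H H0). Qed.
Lemma cont_plus (f g : R -> R) x : continuous f x -> continuous g x ->
  continuous (fun y => f y + g y) x.
Proof. intros; exact (continuous_plus f g x H H0). Qed.
Lemma cont_opp (f : R -> R) x : continuous f x -> continuous (fun y => - f y) x.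
Proof. intros; exact (continuous_opp f x H). Qed.
Lemma cont_sq (f : R -> R) x : continuous f x -> continuous (fun y => f y ^ 2) x.
Proof. intros. apply (cont_mult f (fun y => f y ^ 1)); auto.
  apply (cont_mult f (fun _ => 1)); auto. apply continuous_const. Qed.

Lemma abs_le_sqrt t S : t ^ 2 <= S -> Rabs t <= sqrt S.
Proof. intros. rewrite <- sqrt_Rsqr_abs. apply sqrt_le_1_alt. unfold Rsqr. lra. Qed.

Lemma frame_eps a1 a2 b1 b2 : - a1 * a1 + a2 * a2 = -1 -> - b1 * b1 + b2 * b2 = 1 ->
  - a1 * b1 + a2 * b2 = 0 -> exists e, e * e = 1 /\ b1 = e * a2 /\ b2 = e * a1.
Proof.
  intros H1 H2 H3.
  assert (Ha : a1 <> 0) by nra.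
  assert (Hb1 : b1 * b1 = a2 * a2).
  { assert (b1 * b1 * (a1 * a1) = a2 * a2 * (b2 * b2)).
    { assert (E : a1 * b1 = a2 * b2) by lra.
      transitivity ((a1 * b1) * (a1 * b1)); [ring|]. rewrite E; ring. }
    nra. }
  assert (Hb2 : (b2 - a1) * (b2 + a1) = 0) by nra.
  apply Rmult_integral in Hb2. destruct Hb2 as [Hb|Hb].
  - exists 1. assert (b2 = a1) by lra. subst b2.
    assert (a1 * (b1 - a2) = 0) by nra. apply Rmult_integral in H. destruct H; [easy|].
    split; [ring|]. split; lra.
  - exists (-1). assert (b2 = - a1) by lra. subst b2.
    assert (a1 * (b1 + a2) = 0) by nra. apply Rmult_integral in H. destruct H; [easy|].
    split; [ring|]. split; lra.
Qed.

Lemma xt_le X T l : 0 <= l -> Rabs T <= 2 * l -> X * T <= l * X ^ 2 + l.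
Proof.
  intros Hl HT. pose proof (Rle_abs (X * T)). rewrite Rabs_mult in H.
  pose proof (Rabs_pos X). pose proof (Rabs_pos T).
  assert (Rabs X * Rabs T <= Rabs X * (2 * l)) by (apply Rmult_le_compat_l; lra).
  assert (X * X = Rabs X * Rabs X) by apply Rsqr_abs.
  assert (0 <= l * (Rabs X - 1) ^ 2) by (apply Rmult_le_pos; [lra| apply pow2_ge_0]).
  replace (X ^ 2) with (Rabs X * Rabs X) by (rewrite <- H3; ring).
  nra.
Qed.

Lemma alg_ineq a1 a2 b1 b2 e da1 da2 w1 w2 dw1 dw2 :
  - a1 * a1 + a2 * a2 = -1 -> e * e = 1 -> b1 = e * a2 -> b2 = e * a1 ->
  a1 * da1 = a2 * da2 ->
  let X := (w1 + w2) * (a1 - a2) in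
  let Y := (w1 - w2) * (a1 + a2) in
  let t0 := - (- dw1 * a1 + dw2 * a2) in
  let t1 := - dw1 * b1 + dw2 * b2 in
  let om := - da1 * b1 + da2 * b2 in
  let l := sqrt (t0 ^ 2 + t1 ^ 2 + om ^ 2) in
  (X * ((dw1 + dw2) * (a1 - a2) + (w1 + w2) * (da1 - da2)) +
   Y * ((dw1 - dw2) * (a1 + a2) + (w1 - w2) * (da1 + da2))) / 2
  <= 4 * l * ((X ^ 2 + Y ^ 2) / 4) + l.
Proof.
  intros Ha He Hb1 Hb2 Hd X Y t0 t1 om l.
  set (Z := (da1 - da2) * (a1 + a2)).
  assert (E1 : (w1 + w2) * (da1 - da2) = X * Z).
  { unfold X, Z. transitivity ((w1 + w2) * (da1 - da2) * (a1 * a1 - a2 * a2)).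
    - replace (a1 * a1 - a2 * a2) with 1 by lra. ring.
    - ring. }
  assert (E2 : (w1 - w2) * (da1 + da2) = - (Y * Z)).
  { unfold Y, Z. transitivity ((w1 - w2) * (da1 + da2) * (a1 * a1 - a2 * a2)).
    - replace (a1 * a1 - a2 * a2) with 1 by lra. ring.
    - transitivity (- ((w1 - w2) * (a1 + a2) * ((da1 - da2) * (a1 + a2)))
         + 2 * (w1 - w2) * (a1 + a2) * (a1 * da1 - a2 * da2));
      [ring | rewrite Hd; ring]. }
  assert (EZ : Z = - (e * om)).
  { unfold Z, om. rewrite Hb1, Hb2.
    transitivity ((da1 * a2 - da2 * a1) + (a1 * da1 - a2 * da2)); [ring|].
    rewrite Hd. transitivity (- (e * e) * (da2 * a1 - da1 * a2)); [rewrite He; ring|ring]. }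
  assert (ET1 : (dw1 + dw2) * (a1 - a2) = t0 + e * t1).
  { unfold t0, t1. rewrite Hb1, Hb2.
    transitivity (dw1 * a1 - dw2 * a2 + (e * e) * (- dw1 * a2 + dw2 * a1)); [|ring].
    rewrite He; ring. }
  assert (ET2 : (dw1 - dw2) * (a1 + a2) = t0 - e * t1).
  { unfold t0, t1. rewrite Hb1, Hb2.
    transitivity (dw1 * a1 - dw2 * a2 - (e * e) * (- dw1 * a2 + dw2 * a1)); [|ring].
    rewrite He; ring. }
  assert (Hl0 : 0 <= l) by apply sqrt_pos.
  assert (Ht0 : Rabs t0 <= l).
  { apply abs_le_sqrt. pose proof (pow2_ge_0 t1). pose proof (pow2_ge_0 om). lra. }
  assert (Ht1 : Rabs t1 <= l).
  { apply abs_le_sqrt. pose proof (pow2_ge_0 t0). pose proof (pow2_ge_0 om). lra. }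
  assert (Hom : Rabs om <= l).
  { apply abs_le_sqrt. pose proof (pow2_ge_0 t1). pose proof (pow2_ge_0 t0). lra. }
  assert (Hea : Rabs e = 1).
  { assert (Rabs e * Rabs e = 1) by (rewrite <- Rabs_mult, He; apply Rabs_R1).
    pose proof (Rabs_pos e). nra. }
  assert (HZ : Rabs Z <= l).
  { rewrite EZ, Rabs_Ropp, Rabs_mult, Hea. lra. }
  assert (HT1 : Rabs (t0 + e * t1) <= 2 * l).
  { eapply Rle_trans; [apply Rabs_triang|]. rewrite Rabs_mult, Hea. lra. }
  assert (HT2 : Rabs (t0 - e * t1) <= 2 * l).
  { eapply Rle_trans; [apply Rabs_triang|]. rewrite Rabs_Ropp, Rabs_mult, Hea. lra. }
  rewrite E1, E2, ET1, ET2.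
  pose proof (xt_le X _ l Hl0 HT1). pose proof (xt_le Y _ l Hl0 HT2).
  assert (X ^ 2 * Z <= X ^ 2 * l).
  { apply Rmult_le_compat_l. apply pow2_ge_0. pose proof (Rle_abs Z). lra. }
  assert (- (Y ^ 2 * Z) <= Y ^ 2 * l).
  { rewrite Ropp_mult_distr_r. apply Rmult_le_compat_l. apply pow2_ge_0.
    pose proof (Rle_abs (- Z)) as HH. rewrite Rabs_Ropp in HH. lra. }
  nra.
Qed.

Definition lgen (C1f C2f A1 A2 B1 B2 : R -> R) (s : R) : R :=
  sqrt ((- (- Derive C1f s * A1 s + Derive C2f s * A2 s)) ^ 2 +
        (- Derive C1f s * B1 s + Derive C2f s * B2 s) ^ 2 +
        (- Derive A1 s * B1 s + Derive A2 s * B2 s) ^ 2).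

Ltac fix_eta := repeat match goal with
  | |- context [Derive (fun x : R => ?f x)] => change (fun x : R => f x) with f
  end.

Lemma R4 (A1 A2 : R -> R) s : (forall u, ex_derive A1 u) -> (forall u, ex_derive A2 u) ->
  (forall u, 0 <= u <= 1 -> - A1 u * A1 u + A2 u * A2 u = -1) -> 0 < s < 1 ->
  A1 s * Derive A1 s = A2 s * Derive A2 s.
Proof.
  intros H1 H2 Hf Hs.
  assert (D1 : is_derive (fun u => - A1 u * A1 u + A2 u * A2 u) s
     (-2 * (A1 s * Derive A1 s) + 2 * (A2 s * Derive A2 s))).
  { auto_derive; [repeat split; auto|]. fix_eta. ring. }
  assert (D2' : is_derive (fun u => - A1 u * A1 u + A2 u * A2 u) s 0).
  { apply (is_derive_ext_loc (fun _ => -1)).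
    - apply (locally_interval _ s 0 1); simpl; try lra.
      intros y Hy1 Hy2. symmetry. apply Hf. lra.
    - apply (is_derive_const (-1)). }
  apply is_derive_unique in D1. apply is_derive_unique in D2'. lra.
Qed.

Lemma gen_bound (C1f C2f A1 A2 B1 B2 K : R -> R) :
  Defs.C1 C1f -> Defs.C1 C2f -> Defs.C1 A1 -> Defs.C1 A2 ->
  (forall s, 0 <= s <= 1 -> - A1 s * A1 s + A2 s * A2 s = -1 /\
     - B1 s * B1 s + B2 s * B2 s = 1 /\ - A1 s * B1 s + A2 s * B2 s = 0) ->
  (forall s, is_derive K s (lgen C1f C2f A1 A2 B1 B2 s)) -> K 0 = 0 ->
  Rabs (- (C1f 1 - C1f 0) * (C1f 1 - C1f 0) + (C2f 1 - C2f 0) * (C2f 1 - C2f 0))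
   <= (exp (4 * K 1) - 1) / 2.
Proof.
  intros [dC1 _] [dC2 _] [dA1 _] [dA2 _] Hfr HK HK0.
  set (l := lgen C1f C2f A1 A2 B1 B2).
  set (X := fun u => ((C1f u - C1f 0) + (C2f u - C2f 0)) * (A1 u - A2 u)).
  set (Y := fun u => ((C1f u - C1f 0) - (C2f u - C2f 0)) * (A1 u + A2 u)).
  set (X' := fun u => (Derive C1f u + Derive C2f u) * (A1 u - A2 u)
                    + ((C1f u - C1f 0) + (C2f u - C2f 0)) * (Derive A1 u - Derive A2 u)).
  set (Y' := fun u => (Derive C1f u - Derive C2f u) * (A1 u + A2 u)
                    + ((C1f u - C1f 0) - (C2f u - C2f 0)) * (Derive A1 u + Derive A2 u)).
  set (W := fun u => ((X u ^ 2 + Y u ^ 2) / 4 + / 4) * exp (- 4 * K u)).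
  set (W' := fun u => ((X u * X' u + Y u * Y' u) / 2 - 4 * l u * ((X u ^ 2 + Y u ^ 2) / 4 + / 4))
                       * exp (- 4 * K u)).
  assert (HW : forall u, is_derive W u (W' u)).
  { intros u. unfold W, W', X, Y, X', Y'.
    pose proof (is_derive_unique _ _ _ (HK u)) as HDK.
    auto_derive.
    - repeat split; auto. exists (l u). apply HK.
    - fix_eta. rewrite HDK. fold l. field. }
  assert (HWle : forall u, 0 < u < 1 -> W' u <= 0).
  { intros u Hu. unfold W'.
    assert (Hex := exp_pos (- 4 * K u)).
    cut ((X u * X' u + Y u * Y' u) / 2 <= 4 * l u * ((X u ^ 2 + Y u ^ 2) / 4) + l u).
    { intros Hc. assert (0 <= l u) by apply sqrt_pos. nra. }
    destruct (Hfr u ltac:(lra)) as [F1 [F2 F3]].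
    destruct (frame_eps _ _ _ _ F1 F2 F3) as [e [He [Hb1 Hb2]]].
    pose proof (R4 A1 A2 u dA1 dA2 (fun v hv => proj1 (Hfr v hv)) Hu) as Hd.
    pose proof (alg_ineq (A1 u) (A2 u) (B1 u) (B2 u) e (Derive A1 u) (Derive A2 u)
       (C1f u - C1f 0) (C2f u - C2f 0) (Derive C1f u) (Derive C2f u) F1 He Hb1 Hb2 Hd) as HA.
    simpl in HA. unfold X, Y, X', Y', l, lgen. exact HA. }
  destruct (MVT_cor2 W W' 0 1 ltac:(lra)) as [z [Hz Hz']].
  { intros u _. apply is_derive_Reals. apply HW. }
  specialize (HWle z Hz').
  assert (HW1 : W 1 <= / 4).
  { replace (/ 4) with (W 0).
    - lra.
    - unfold W, X, Y. rewrite HK0. replace (- 4 * 0) with 0 by ring. rewrite exp_0. field. }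
  unfold W in HW1.
  set (L := K 1) in *.
  assert (HN : (X 1 ^ 2 + Y 1 ^ 2) / 4 + / 4 <= exp (4 * L) / 4).
  { assert (E : exp (- 4 * L) * exp (4 * L) = 1).
    { rewrite <- exp_plus. replace (_ + _) with 0 by ring. apply exp_0. }
    pose proof (exp_pos (4 * L)).
    apply (Rmult_le_compat_r (exp (4 * L))) in HW1; [|lra].
    rewrite Rmult_assoc, E in HW1. lra. }
  assert (HXY : - (C1f 1 - C1f 0) * (C1f 1 - C1f 0) + (C2f 1 - C2f 0) * (C2f 1 - C2f 0)
     = - (X 1 * Y 1)).
  { destruct (Hfr 1 ltac:(lra)) as [F1 _]. unfold X, Y.
    transitivity (- (((C1f 1 - C1f 0) * (C1f 1 - C1f 0) - (C2f 1 - C2f 0) * (C2f 1 - C2f 0))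
                   * (A1 1 * A1 1 - A2 1 * A2 1))).
    - replace (A1 1 * A1 1 - A2 1 * A2 1) with 1 by lra. ring.
    - ring. }
  rewrite HXY, Rabs_Ropp, Rabs_mult.
  assert (2 * (Rabs (X 1) * Rabs (Y 1)) <= X 1 ^ 2 + Y 1 ^ 2).
  { assert (Q0 : X 1 * X 1 = Rabs (X 1) * Rabs (X 1)) by apply Rsqr_abs.
    assert (Q1 : Y 1 * Y 1 = Rabs (Y 1) * Rabs (Y 1)) by apply Rsqr_abs.
    pose proof (pow2_ge_0 (Rabs (X 1) - Rabs (Y 1))).
    replace (X 1 ^ 2 + Y 1 ^ 2) with (X 1 * X 1 + Y 1 * Y 1) by ring.
    rewrite Q0, Q1. lra. }
  lra.
Qed.

Lemma lgen_cont (C1f C2f A1 A2 B1 B2 : R -> R) :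
  Defs.C1 C1f -> Defs.C1 C2f -> Defs.C1 A1 -> Defs.C1 A2 -> Defs.C1 B1 -> Defs.C1 B2 ->
  forall s, continuous (lgen C1f C2f A1 A2 B1 B2) s.
Proof.
  intros [d1 c1] [d2 c2] [d3 c3] [d4 c4] [d5 c5] [d6 c6] s. unfold lgen.
  apply continuous_sqrt_comp.
  assert (CA1 := ex_derive_continuous A1 s (d3 s)).
  assert (CA2 := ex_derive_continuous A2 s (d4 s)).
  assert (CB1 := ex_derive_continuous B1 s (d5 s)).
  assert (CB2 := ex_derive_continuous B2 s (d6 s)).
  specialize (c1 s); specialize (c2 s); specialize (c3 s); specialize (c4 s).
  repeat first [ apply cont_plus | apply cont_sq | apply cont_opp | apply cont_mult
               | assumption ].
Qed.

Lemma curve_bound c e0 e1 : OInMplus_curve c e0 e1 ->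
  Rabs (eta (dd (c 1) (c 0)) (dd (c 1) (c 0))) <= (exp (4 * blength c e0 e1) - 1) / 2.
Proof.
  intros [[Hc1 Hc2] [[Ha1 Ha2] [[Hb1 Hb2] Hfr]]].
  set (C1f := fun u => fst (c u)). set (C2f := fun u => snd (c u)).
  set (A1 := fun u => fst (e0 u)). set (A2 := fun u => snd (e0 u)).
  set (B1 := fun u => fst (e1 u)). set (B2 := fun u => snd (e1 u)).
  assert (Hl : forall s, sqrt (Gsq c e0 e1 s) = lgen C1f C2f A1 A2 B1 B2 s) by reflexivity.
  assert (Hcont := lgen_cont C1f C2f A1 A2 B1 B2 Hc1 Hc2 Ha1 Ha2 Hb1 Hb2).
  set (K := fun s => RInt (lgen C1f C2f A1 A2 B1 B2) 0 s).
  assert (HK : forall s, is_derive K s (lgen C1f C2f A1 A2 B1 B2 s)).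
  { intros s. apply (is_derive_RInt _ K 0); [|apply Hcont].
    apply filter_forall. intros b. apply RInt_correct. apply ex_RInt_continuous.
    intros z _. apply Hcont. }
  assert (HK0 : K 0 = 0) by (unfold K; rewrite RInt_point; reflexivity).
  assert (Hfr' : forall s, 0 <= s <= 1 -> - A1 s * A1 s + A2 s * A2 s = -1 /\
     - B1 s * B1 s + B2 s * B2 s = 1 /\ - A1 s * B1 s + A2 s * B2 s = 0).
  { intros s Hs. destruct (Hfr s Hs) as [_ [F1 [F2 F3]]]. exact (conj F1 (conj F2 F3)). }
  pose proof (gen_bound C1f C2f A1 A2 B1 B2 K Hc1 Hc2 Ha1 Ha2 Hfr' HK HK0) as HB.
  assert (E : blength c e0 e1 = K 1).
  { unfold blength, K. apply RInt_ext. intros; apply Hl. }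
  rewrite E. unfold eta, dd. simpl. exact HB.
Qed.

Lemma C1_affine (f : R -> R) x0 d : (forall s, f s = x0 + s * d) ->
  Defs.C1 f /\ forall s, Derive f s = d.
Proof.
  intros Hf.
  assert (HD : forall s, is_derive f s d).
  { intros s. apply (is_derive_ext (fun u => x0 + u * d)); [intros; symmetry; apply Hf|].
    auto_derive; auto. ring. }
  assert (HD' : forall s, Derive f s = d) by (intros; apply is_derive_unique, HD).
  split; [split|]; auto.
  - intros s. exists d. apply HD.
  - intros s. apply (continuous_ext (fun _ => d)); [intros; symmetry; apply HD'|].
    apply continuous_const.
Qed.

Lemma C1_constf (f : R -> R) k : (forall s, f s = k) -> Defs.C1 f /\ forall s, Derive f s = 0.
Proof.
  intros Hf. destruct (C1_affine f k 0) as [H1 H2]; [intros; rewrite Hf; ring|]. auto.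
Qed.

Lemma glb_small (E : R -> Prop) : Glb_Rbar E = Finite 0 ->
  forall e, 0 < e -> exists l, E l /\ l < e.
Proof.
  intros HG e He. apply NNPP. intros Hn.
  destruct (Glb_Rbar_correct E) as [_ H2]. rewrite HG in H2.
  assert (Hlb : is_lb_Rbar E (Finite e)).
  { intros x Hx. simpl. apply Rnot_lt_le. intros Hlt. apply Hn. exists x. auto. }
  specialize (H2 _ Hlb). simpl in H2. lra.
Qed.

Lemma deck0 xi0 p : deck xi0 0 p = p.
Proof.
  unfold deck, boost. replace (IZR 0 * xi0) with 0 by (simpl; ring).
  rewrite cosh_0, sinh_0. destruct p; simpl; f_equal; ring.
Qed.

Lemma uc_pos_deck xi0 k q : InMplus q -> 0 < uc (deck xi0 k q).
Proof.
  intros Hq. unfold deck. rewrite boost_u. apply Rmult_lt_0_compat; [apply exp_pos|exact Hq].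
Qed.

Lemma dir1 xi0 (hxi0 : 0 < xi0) p q : InMplus p -> InMplus q -> calN xi0 p q -> Np xi0 p q.
Proof.
  intros Hp Hq HN.
  assert (Hsmall : forall e, 0 < e -> exists m : Z, Rabs (Fm xi0 p q m) < e).
  { intros e He.
    set (dl := ln (1 + e) / 4).
    assert (Hdl : exp (4 * dl) = 1 + e).
    { unfold dl. replace (4 * (ln (1 + e) / 4)) with (ln (1 + e)) by field.
      apply exp_ln. lra. }
    assert (Hdl0 : 0 < dl).
    { unfold dl. apply Rdiv_lt_0_compat; [|lra]. rewrite <- ln_1. apply ln_increasing; lra. }
    destruct (glb_small _ HN dl Hdl0) as [l [[c [e0 [e1 [j [k [Hcur [Hc0 [Hc1 Hl]]]]]]]] Hll]].
    exists (k - j)%Z.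
    pose proof (curve_bound c e0 e1 Hcur) as HB.
    rewrite Hc0, Hc1, deck_interval, Rabs_Ropp in HB. rewrite <- Hl in HB.
    assert (exp (4 * l) < exp (4 * dl)) by (apply exp_increasing; lra).
    lra. }
  unfold Fm in Hsmall.
  destruct (discrete xi0 hxi0 (uc q) (uc p) (vc q) (vc p) Hq Hp Hsmall) as [m Hm].
  set (Q := deck xi0 m q).
  set (d1 := fst Q - fst p). set (d2 := snd Q - snd p).
  set (g := fun s : R => (fst p + s * d1, snd p + s * d2)).
  exists g, 0%Z, m.
  destruct (C1_affine (fun u => fst (g u)) (fst p) d1) as [G1 G1'];
    [intros; reflexivity|].
  destruct (C1_affine (fun u => snd (g u)) (snd p) d2) as [G2 G2'];
    [intros; reflexivity|].
  destruct (C1_constf (fun u => fst (D2 g u)) d1) as [G3 G3'];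
    [intros; unfold D2; simpl; apply G1'|].
  destruct (C1_constf (fun u => snd (D2 g u)) d2) as [G4 G4'];
    [intros; unfold D2; simpl; apply G2'|].
  split; [split; [split; auto | split; [split; auto |]] |].
  - intros s Hs. split; [|split].
    + unfold InMplus, g; simpl.
      pose proof (uc_pos_deck xi0 m q Hq) as HQ. fold Q in HQ. unfold uc in HQ.
      unfold InMplus in Hp. unfold d1, d2.
      replace (fst p + s * (fst Q - fst p) + (snd p + s * (snd Q - snd p)))
        with ((1 - s) * (fst p + snd p) + s * (fst Q + snd Q)) by ring.
      destruct (Req_dec s 0) as [->|Hs0]; [lra|].
      assert (0 < s) by lra. nra.
    + unfold D2 at 1. rewrite G3', G4'. reflexivity.
    + unfold D2; rewrite G1', G2'.
      pose proof (deck_interval xi0 p q 0 m) as HI.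
      rewrite deck0, Z.sub_0_r in HI. fold Q in HI. unfold Fm in HI. rewrite Hm in HI.
      unfold dd in HI. fold d1 d2 in HI. simpl. lra.
  - split.
    + unfold g. rewrite deck0. destruct p; simpl; f_equal; ring.
    + unfold g. fold Q. unfold d1, d2. destruct Q; simpl; f_equal; ring.
Qed.

Lemma affine_end (f : R -> R) : Defs.C1 f -> Defs.C1 (Derive f) ->
  (forall s, 0 <= s <= 1 -> Derive (Derive f) s = 0) -> f 1 - f 0 = Derive f 0.
Proof.
  intros [Hf _] [Hdf _] H0.
  assert (HD : forall s, 0 <= s <= 1 -> Derive f s = Derive f 0).
  { intros s Hs. destruct (Req_dec s 0) as [->|Hs0]; [reflexivity|].
    destruct (MVT_cor2 (Derive f) (fun _ => 0) 0 s ltac:(lra)) as [z [Hz Hz']].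
    { intros z Hz. apply is_derive_Reals. rewrite <- (H0 z ltac:(lra)).
      apply Derive_correct. apply Hdf. }
    lra. }
  destruct (MVT_cor2 f (Derive f) 0 1 ltac:(lra)) as [z [Hz Hz']].
  { intros z Hz. apply is_derive_Reals. apply Derive_correct. apply Hf. }
  rewrite Hz, HD by lra. ring.
Qed.

Lemma blength_nonneg c e0 e1 : OInMplus_curve c e0 e1 -> 0 <= blength c e0 e1.
Proof.
  intros [[Hc1 Hc2] [[Ha1 Ha2] [[Hb1 Hb2] _]]].
  unfold blength. apply RInt_ge_0; [lra| |intros; apply sqrt_pos].
  apply (@ex_RInt_continuous R_CompleteNormedModule). intros z _.
  exact (lgen_cont _ _ _ _ _ _ Hc1 Hc2 Ha1 Ha2 Hb1 Hb2 z).
Qed.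

Lemma dir2 xi0 p q : Np xi0 p q -> calN xi0 p q.
Proof.
  intros [g [j [k [[[Hg1 Hg2] [[Hd1 Hd2] Hgs]] [H0 H1]]]]].
  assert (E1 : fst (g 1) - fst (g 0) = Derive (fun u => fst (g u)) 0).
  { apply (affine_end (fun u => fst (g u)) Hg1 Hd1).
    intros s Hs. destruct (Hgs s Hs) as [_ [HH _]].
    exact (f_equal fst HH). }
  assert (E2 : snd (g 1) - snd (g 0) = Derive (fun u => snd (g u)) 0).
  { apply (affine_end (fun u => snd (g u)) Hg2 Hd2).
    intros s Hs. destruct (Hgs s Hs) as [_ [HH _]].
    exact (f_equal snd HH). }
  destruct (Hgs 0 ltac:(lra)) as [HP0 [_ Hnull]].
  destruct (Hgs 1 ltac:(lra)) as [HP1 _].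
  unfold eta, D2 in Hnull; simpl in Hnull. rewrite <- E1, <- E2 in Hnull.
  set (P0 := g 0) in *. set (P1 := g 1) in *.
  set (d1 := fst P1 - fst P0) in *. set (d2 := snd P1 - snd P0) in *.
  assert (Hsig : exists sg, sg * sg = 1 /\ d2 = sg * d1).
  { assert ((d2 - d1) * (d2 + d1) = 0) by nra.
    apply Rmult_integral in H. destruct H.
    - exists 1. split; lra.
    - exists (-1). split; lra. }
  destruct Hsig as [sg [Hsg Hd]].
  set (E := fun l => exists (c e0 e1 : R -> R * R) (j k : Z),
     OInMplus_curve c e0 e1 /\ c 0 = deck xi0 j p /\ c 1 = deck xi0 k q /\
     l = blength c e0 e1).
  assert (Hel : forall f, 0 < f -> E (sqrt (2 * d1 ^ 2 * f ^ 2))).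
  { intros f Hf.
    set (a := (/ f + f) / 2). set (b := (/ f - f) / 2).
    set (c := fun u : R => (fst P0 + u * d1, snd P0 + u * d2)).
    set (e0 := fun _ : R => (a, sg * b)). set (e1 := fun _ : R => (sg * b, a)).
    exists c, e0, e1, j, k.
    destruct (C1_affine (fun u => fst (c u)) (fst P0) d1) as [C1a C1a'];
      [intros; reflexivity|].
    destruct (C1_affine (fun u => snd (c u)) (snd P0) d2) as [C2a C2a'];
      [intros; reflexivity|].
    destruct (C1_constf (fun u => fst (e0 u)) a) as [C3 C3']; [intros; reflexivity|].
    destruct (C1_constf (fun u => snd (e0 u)) (sg * b)) as [C4 C4']; [intros; reflexivity|].
    destruct (C1_constf (fun u => fst (e1 u)) (sg * b)) as [C5 C5']; [intros; reflexivity|].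
    destruct (C1_constf (fun u => snd (e1 u)) a) as [C6 C6']; [intros; reflexivity|].
    assert (Hab : (a + b) * (a - b) = 1).
    { unfold a, b. field. lra. }
    assert (Hamb : a - b = f) by (unfold a, b; field; lra).
    split; [|split; [|split]].
    - split; [split; auto|split; [split; auto|split; [split; auto|]]].
      intros s Hs. split.
      + unfold InMplus, c; simpl. unfold InMplus in HP0, HP1. unfold d1, d2.
        replace (fst P0 + s * (fst P1 - fst P0) + (snd P0 + s * (snd P1 - snd P0)))
          with ((1 - s) * (fst P0 + snd P0) + s * (fst P1 + snd P1)) by ring.
        destruct (Req_dec s 0) as [->|Hs0]; [lra|].
        assert (0 < s) by lra. nra.
      + unfold frame_ok, eta, e0, e1; simpl. split; [|split].
        * transitivity (- ((a + b) * (a - b)) + (sg * sg - 1) * b * b); [ring|].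
          rewrite Hab, Hsg. ring.
        * transitivity ((a + b) * (a - b) + (1 - sg * sg) * b * b); [ring|].
          rewrite Hab, Hsg. ring.
        * ring.
    - unfold c. rewrite <- H0. apply injective_projections; simpl; ring.
    - unfold c. rewrite <- H1. unfold d1, d2. apply injective_projections; simpl; ring.
    - unfold blength. rewrite (RInt_ext _ (fun _ => sqrt (2 * d1 ^ 2 * f ^ 2))).
      + rewrite RInt_const. unfold scal; simpl. unfold mult; simpl. ring.
      + intros s _. f_equal. unfold Gsq, theta0, theta1, omega, eta, D2.
        simpl. rewrite C1a', C2a', C3', C4'.
        unfold e0, e1; simpl. rewrite Hd.
        transitivity ((d1 * (a - b) + d1 * (1 - sg * sg) * b) ^ 2
                      + (sg * d1 * (a - b)) ^ 2 + 0); [ring|].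
        rewrite Hamb, Hsg. transitivity ((1 + sg * sg) * d1 ^ 2 * f ^ 2); [ring|].
        rewrite Hsg. ring. }
  assert (Hsm : forall r, 0 < r -> exists x, E x /\ x < r).
  { intros r Hr. set (f := r / (2 * (Rabs d1 + 1))).
    assert (Hf : 0 < f).
    { unfold f. apply Rdiv_lt_0_compat; [lra|]. pose proof (Rabs_pos d1). lra. }
    exists (sqrt (2 * d1 ^ 2 * f ^ 2)). split; [apply Hel, Hf|].
    rewrite <- (sqrt_Rsqr r) by lra. apply sqrt_lt_1_alt. split.
    - pose proof (pow2_ge_0 d1). pose proof (pow2_ge_0 f). nra.
    - unfold Rsqr.
      assert (Hfe : f * (2 * (Rabs d1 + 1)) = r) by (unfold f; field; pose proof (Rabs_pos d1); lra).
      assert (Q0' : d1 * d1 = Rabs d1 * Rabs d1) by apply Rsqr_abs.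
      assert (Q0 : d1 ^ 2 = Rabs d1 * Rabs d1) by (rewrite <- Q0'; ring).
      rewrite <- Hfe. rewrite Q0. pose proof (Rabs_pos d1). nra. }
  unfold calN, dtilde. fold E. apply is_glb_Rbar_unique. split.
  - intros x [c [e0 [e1 [j' [k' [Hcur [_ [_ ->]]]]]]]]. simpl. apply blength_nonneg, Hcur.
  - intros b Hb. destruct b as [r| |]; simpl; auto.
    + apply Rnot_lt_le. intros hr. destruct (Hsm r hr) as [x [Hx Hxr]].
      specialize (Hb x Hx). simpl in Hb. lra.
    + destruct (Hsm 1 ltac:(lra)) as [x [Hx _]]. exact (Hb x Hx).
Qed.

Theorem mainTheorem9 (xi0 : R) (hxi0 : 0 < xi0) (p q : R * R) :
  InMplus p -> InMplus q -> (calN xi0 p q <-> Np xi0 p q).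
Proof.
  intros Hp Hq. split.
  - apply dir1; auto.
  - apply dir2.
Qed.
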